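(* Let $W$ be a nonzero restricted $\widehat{\mathfrak h}$-module satisfying condition $\mathcal C_0$. Then $\Omega_W\neq0$, i.e. $W$ contains a vacuum vector.
   Context: Let $p$ be a prime and $\mathbb{F}$ a field of characteristic $p$. Integers are viewed as elements of the prime subfield of $\mathbb{F}$. We write $\mathbb{Z}_+$ for the positive integers. <b>Heisenberg setup.</b> Let $\mathfrak h$ be a finite-dimensional $\mathbb{F}$-vector space with a non-degenerate symmetric bilinear form $\langle\cdot,\cdot\rangle$. The affine Lie algebra is $\widehat{\mathfrak h}=\mathfrak h\otimes\mathbb{F}[t,t^{-1}]\oplus\mathbb{F}\mathbf k$, where $\mathbf k$ is central and, writing $u(m)=u\otimes t^m$, $$[u(m),v(n)]=m\,\delta_{m+n,0}\langle u,v\rangle\mathbf k.$$ Set $\widehat{\mathfrak h}_+=\bigoplus_{n>0}\mathfrak h\otimes t^{-n}$ and $\widehat{\mathfrak h}_-=\bigoplus_{n>0}\mathfrak h\otimes t^{n}$. For a linear functional $\lambda\in(\widehat{\mathfrak h}_+)^*$, write $\lambda_n(u)=\lambda(u(-n))$ for $u\in\mathfrak h$, $n\in\mathbb{Z}_+$. <b>Restricted modules and vacuum vectors.</b> An $\widehat{\mathfrak h}$-module $W$ is restricted if for all $u\in\mathfrak h$ and $w\in W$ we have $u(n)w=0$ for $n\gg0$. Set $\Omega_W=\{w\in W:\widehat{\mathfrak h}_-w=0\}$; its nonzero elements are called vacuum vectors. <b>Condition $\mathcal C_0$.</b> A restricted $\widehat{\mathfrak h}$-module $W$ satisfies condition $\mathcal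 C_0$ if both of the following hold. <ol> <li>For all $u\in\mathfrak h$ and $n\in\mathbb{Z}_+$, the operators $u(np)$ and $u(n)^p$ act as $0$ on $W$.</li> <li>The operators $u(-np)$ and $u(-n)^p$ ($u\in\mathfrak h$, $n\ge0$) act semisimply and simultaneously. Precisely, $$W=\bigoplus_{(\lambda_0,\lambda)\in\mathfrak h^*\times(\widehat{\mathfrak h}_+)^*}W_{\lambda_0,\lambda},$$ where $W_{\lambda_0,\lambda}$ is the set of $w\in W$ such that: <ul> <li>$u(0)w=\lambda_0(u)w$ for all $u\in\mathfrak h$;</li> <li>$u(-m)w=\lambda_m(u)w$ for all $u\in\mathfrak h$, $m\in p\mathbb{Z}_+$;</li> <li>$u(-n)^pw=\lambda_n(u)^pw$ for all $u\in\mathfrak h$, $n\in\mathbb{Z}_+$.</li> </ul></li> </ol> *)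

(* Defs.v *)
From HB Require Import structures.
From mathcomp Require Import all_boot all_order all_algebra.
Set Implicit Arguments. Unset Strict Implicit. Unset Printing Implicit Defensive.
Import Order.TTheory GRing.Theory Num.Theory.
Local Open Scope ring_scope.

(* An action of the affine Heisenberg algebra  \hat h  on W is encoded by
   rho u n = the operator u(n) = u ⊗ t^n  (u : h, n : int), and
   K = the operator by which the central element k acts. *)

Section Heis.
Variables (F : fieldType) (hT : vectType F) (W : lmodType F).

Definition lin_functional (f : hT -> F) : Prop :=
  forall (a : F) (u v : hT), f (a *: u + v) = a * f u + f v.

Definition nondeg_sym_bilinear (form : hT -> hT -> F) : Prop :=
  [/\ forall u v, form u v = form v u,
      forall (a : F) u v w, form (a *: u + v) w = a * form u w + form v w
    & forall u, (forall v, form u v = 0) -> u = 0].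

Definition heis_module (form : hT -> hT -> F)
    (rho : hT -> int -> W -> W) (K : W -> W) : Prop :=
  [/\ forall u n (a : F) (w1 w2 : W),
        rho u n (a *: w1 + w2) = a *: rho u n w1 + rho u n w2,
      forall (a : F) (w1 w2 : W), K (a *: w1 + w2) = a *: K w1 + K w2,
      forall (a : F) u v n w, rho (a *: u + v) n w = a *: rho u n w + rho v n w,
      forall u n w, K (rho u n w) = rho u n (K w)
    & forall u v (m n : int) w,
        rho u m (rho v n w) - rho v n (rho u m w)
        = (if m + n == 0 then m%:~R * form u v else 0) *: K w].

Definition restricted (rho : hT -> int -> W -> W) : Prop :=
  forall u w, exists N : nat, forall n : nat, (N <= n)%N -> rho u (Posz n) w = 0.

(* A weight (λ0, λ) ∈ h^* × (\hat h_+)^*: λ0 is a functional on h and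
   λ n (for n > 0) is the functional λ_n(u) = λ(u(-n)); the value λ 0 is unused. *)
Definition weight_ok (l0 : hT -> F) (l : nat -> hT -> F) : Prop :=
  lin_functional l0 /\ forall n : nat, (0 < n)%N -> lin_functional (l n).

Definition in_weight_space (p : nat) (rho : hT -> int -> W -> W)
    (l0 : hT -> F) (l : nat -> hT -> F) (w : W) : Prop :=
  [/\ forall u, rho u 0 w = l0 u *: w,
      forall u (m : nat), (0 < m)%N -> (p %| m)%N -> rho u (- Posz m) w = l m u *: w
    & forall u (n : nat), (0 < n)%N -> iter p (rho u (- Posz n)) w = (l n u) ^+ p *: w].

Definition same_weight (l0 l0' : hT -> F) (l l' : nat -> hT -> F) : Prop :=
  (forall u, l0 u = l0' u) /\ (forall n u, (0 < n)%N -> l n u = l' n u).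

Definition cond_C0 (p : nat) (rho : hT -> int -> W -> W) : Prop :=
  [/\
      forall u (n : nat) w, (0 < n)%N ->
        rho u (Posz (n * p)) w = 0 /\ iter p (rho u (Posz n)) w = 0,
      (* (2a) W is the sum of the weight spaces *)
      forall w : W, exists (N : nat) (L0 : 'I_N -> hT -> F)
          (L : 'I_N -> nat -> hT -> F) (v : 'I_N -> W),
        (forall i, weight_ok (L0 i) (L i) /\ in_weight_space p rho (L0 i) (L i) (v i))
        /\ w = \sum_(i < N) v i
    & (* (2b) the sum is direct *)
      forall (N : nat) (L0 : 'I_N -> hT -> F) (L : 'I_N -> nat -> hT -> F)
          (v : 'I_N -> W),
        (forall i j, same_weight (L0 i) (L0 j) (L i) (L j) -> i = j) ->
        (forall i, weight_ok (L0 i) (L i) /\ in_weight_space p rho (L0 i) (L i) (v i)) ->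
        \sum_(i < N) v i = 0 -> forall i, v i = 0].

Definition vacuum_space (rho : hT -> int -> W -> W) (w : W) : Prop :=
  forall u (n : nat), (0 < n)%N -> rho u (Posz n) w = 0.

End Heis.

(* Main.v *)
Require Import Defs.
From HB Require Import structures.
From mathcomp Require Import all_boot all_order all_algebra.
Import GRing.Theory.
Local Open Scope ring_scope.

Lemma kill_one (V : zmodType) (p : nat) (f : V -> V) (Q : V -> Prop) (w : V) :
  w != 0 -> Q w -> (forall x, Q x -> Q (f x)) -> iter p f w = 0 ->
  exists w', [/\ w' != 0, Q w', f w' = 0 & exists j, w' = iter j f w].
Proof.
move=> w0 Qw Qf hp.
have exP : exists n, (fun n => iter n f w == 0) n by exists p; apply/eqP.
case: (ex_minnP exP) => m /eqP hm hmin.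
have m0 : (0 < m)%N.
  case: m hm hmin => // hm; by move: w0; rewrite -[w]/(iter 0 f w) hm eqxx.
exists (iter m.-1 f w); split.
- apply/negP => /eqP h; have := hmin m.-1; rewrite h eqxx => /(_ isT).
  by case: m m0 {hm hmin h} => // n; rewrite ltnn.
- elim: m.-1 => //= n IH; exact: Qf.
- by rewrite -iterS prednK.
- by exists m.-1.
Qed.

Lemma kill_all (V : zmodType) (p : nat) (I : eqType) (op : I -> V -> V) (s : seq I) :
  (forall i, op i 0 = 0) -> (forall i x, iter p (op i) x = 0) ->
  (forall i j x, op i (op j x) = op j (op i x)) ->
  forall (Q : V -> Prop) w, w != 0 -> Q w -> (forall i x, Q x -> Q (op i x)) ->
  exists w', [/\ w' != 0, Q w' & forall i, i \in s -> op i w' = 0].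
Proof.
move=> h0 hnil hcomm; elim: s => [|f s IH] Q w w0 Qw Qop.
  by exists w; split.
have [w1 [w10 Qw1 fw1 _]] := @kill_one V p (op f) Q w w0 Qw (Qop f) (hnil f w).
have [w2 [w20 [Qw2 fw2] hs]] : exists w2, [/\ w2 != 0, Q w2 /\ op f w2 = 0
    & forall i, i \in s -> op i w2 = 0].
  apply: (IH _ w1 w10) => //.
  by move=> i x [Qx fx]; split; [apply: Qop | rewrite hcomm fx h0].
exists w2; split=> // i; rewrite inE => /orP [/eqP -> //|]; exact: hs.
Qed.

Theorem lemma4 (p : nat) (F : fieldType) (hp : prime p) (charF : p \in [pchar F])
    (hT : vectType F) (form : hT -> hT -> F) (hform : nondeg_sym_bilinear form)
    (W : lmodType F) (rho : hT -> int -> W -> W) (K : W -> W)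
    (hmod : heis_module form rho K) (hres : restricted rho)
    (hC0 : cond_C0 p rho) (hW : exists w : W, w <> 0) :
  exists w : W, w <> 0 /\ vacuum_space rho w.
Proof.
case: hmod => hlin _ hlinu _ hbr.
case: hC0 => hnil _ _.
case: hW => w /eqP w0.
pose B := vbasis (fullv : {vspace hT}).
pose d := \dim (fullv : {vspace hT}).
have [N hN] : exists N : nat, forall i : 'I_d, forall n : nat, (N <= n)%N ->
    rho B`_i (Posz n) w = 0.
  have : forall k : nat, exists N : nat, forall i : 'I_d, (i < k)%N ->
      forall n : nat, (N <= n)%N -> rho B`_i (Posz n) w = 0.
    elim=> [|k [N IH]]; first by exists 0%N.
    have [M hM] := hres B`_k w.
    exists (maxn N M) => i; rewrite ltnS leq_eqVlt => /orP [/eqP ik|ik] n hn.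
      by rewrite ik; apply: hM; apply: leq_trans hn; rewrite leq_maxr.
    by apply: IH => //; apply: leq_trans hn; rewrite leq_maxl.
  by case/(_ d) => N hN; exists N => i; apply: hN.
have rho0 : forall u n, rho u n 0 = 0.
  move=> u n; have := hlin u n (-1) 0 0; rewrite scaler0 addr0 scaleN1r addNr.
  by [].
have comm : forall u v (m n : nat), (0 < m)%N -> (0 < n)%N -> forall x,
    rho u (Posz m) (rho v (Posz n) x) = rho v (Posz n) (rho u (Posz m) x).
  move=> u v m n m0 n0 x; apply/eqP; rewrite -subr_eq0 hbr.
  have -> : (Posz m + Posz n == 0) = false.
    by apply/negbTE; rewrite -PoszD; case: (m + n)%N (addn_gt0 m n) => //; rewrite m0.
  by rewrite scale0r.
pose op := fun ij : 'I_d * 'I_N => rho B`_(ij.1) (Posz (ij.2).+1).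
have Qcl : forall (ij : 'I_d * 'I_N) x,
    (forall i : 'I_d, forall n : nat, (N <= n)%N -> rho B`_i (Posz n) x = 0) ->
    (forall i : 'I_d, forall n : nat, (N <= n)%N -> rho B`_i (Posz n) (op ij x) = 0).
  move=> [i j] x Qx k n hn; rewrite /op /=.
  have n0 : (0 < n)%N by apply: leq_trans hn; case: (N) j => [[]|].
  by rewrite comm // Qx // rho0.
have [w' [w'0 Qw' hall]] := @kill_all W p _ op (enum {: 'I_d * 'I_N})
  (fun ij => rho0 _ _) (fun ij x => (hnil _ _ x (ltn0Sn _)).2)
  (fun i j x => comm _ _ _ _ (ltn0Sn _) (ltn0Sn _) x)
  (fun x => forall i : 'I_d, forall n : nat, (N <= n)%N -> rho B`_i (Posz n) x = 0)
  w w0 hN Qcl.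
exists w'; split; first by apply/eqP.
  move=> u n n0.
  have kb : forall i : 'I_d, rho B`_i (Posz n) w' = 0.
    move=> i; case: (leqP N n) => hn; first exact: Qw'.
    case: n n0 hn => // n _ hn.
    by have := hall (i, Ordinal (ltnW hn)); rewrite mem_enum; apply.
  have gadd : forall x y, rho (x + y) (Posz n) w' = rho x (Posz n) w' + rho y (Posz n) w'.
    by move=> x y; have := hlinu 1 x y (Posz n) w'; rewrite !scale1r.
  have gscal : forall (a : F) x, rho (a *: x) (Posz n) w' = a *: rho x (Posz n) w'.
    move=> a x; rewrite -[a *: x]addr0 hlinu.
    have -> : rho 0 (Posz n) w' = 0.
      by apply/esym/(addrI (rho 0 (Posz n) w')); rewrite addr0 -gadd addr0.
    by rewrite addr0.
  rewrite (coord_vbasis (memvf u)).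
  elim/big_rec: _ => [|i x _ IH].
    by apply/esym/(addrI (rho 0 (Posz n) w')); rewrite addr0 -gadd addr0.
  by rewrite gadd IH gscal kb scaler0 addr0.
Qed.
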